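(* Let $K$ be a commutative Noetherian ring with $1$, let $A$ be a $K$-algebra, and let $B$ be a $K$-subalgebra of $A$ such that $A/B$ is a finitely generated $K$-module. Then $B$ contains an ideal $I$ of $A$ such that $B/I$ is a finitely generated $K$-module (and hence $A/I$ is a finitely generated $K$-module as well).
   Context: A $K$-algebra is a structure that is simultaneously an associative ring (not necessarily with identity) and a $K$-module, with $K$-bilinear multiplication. *)

(* Defs.v *)
From mathcomp Require Import all_boot all_algebra.
Set Implicit Arguments.
Unset Strict Implicit.
Unset Printing Implicit Defensive.
Import GRing.Theory.
Local Open Scope ring_scope.

Definition is_ideal_comm (K : comPzRingType) (I : K -> Prop) : Prop :=
  [/\ I 0, (forall x y, I x -> I y -> I (x + y)) & (forall k x, I x -> I (k * x))].

Definition noetherian_ring (K : comPzRingType) : Prop :=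
  forall I : K -> Prop, is_ideal_comm I ->
    exists s : seq K, forall x, I x <-> exists c : seq K, x = \sum_(i < size s) c`_i * s`_i.

Definition in_Kspan (K : pzRingType) (M : lmodType K) (s : seq M) (x : M) : Prop :=
  exists c : seq K, x = \sum_(i < size s) c`_i *: s`_i.

(* (M, mul) is a K-algebra: an associative (not necessarily unital) ring
   structure on the K-module M with K-bilinear multiplication. *)
Definition is_Kalgebra (K : comPzRingType) (M : lmodType K) (mul : M -> M -> M) : Prop :=
  [/\ associative mul,
      (forall a x y, mul a (x + y) = mul a x + mul a y),
      (forall a x y, mul (x + y) a = mul x a + mul y a),
      (forall k x y, mul (k *: x) y = k *: mul x y) &
      (forall k x y, mul x (k *: y) = k *: mul x y)].

Definition is_Ksubmodule (K : pzRingType) (M : lmodType K) (S : M -> Prop) : Prop :=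
  [/\ S 0, (forall x y, S x -> S y -> S (x + y)) & (forall k x, S x -> S (k *: x))].

Definition is_Ksubalgebra (K : comPzRingType) (M : lmodType K) (mul : M -> M -> M)
  (B : M -> Prop) : Prop :=
  is_Ksubmodule B /\ (forall x y, B x -> B y -> B (mul x y)).

Definition is_Kideal (K : comPzRingType) (M : lmodType K) (mul : M -> M -> M)
  (I : M -> Prop) : Prop :=
  [/\ is_Ksubmodule I, (forall a x, I x -> I (mul a x)) & (forall a x, I x -> I (mul x a))].

(* For K-submodules N <= S of M: the quotient K-module S/N is finitely
   generated, i.e. there is a finite family s in S with S = N + span s. *)
Definition fg_quotient (K : pzRingType) (M : lmodType K) (S N : M -> Prop) : Prop :=
  exists s : seq M, (forall i, (i < size s)%N -> S s`_i) /\
    forall x, S x -> exists n y, N n /\ in_Kspan s y /\ x = n + y.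

(* Main.v *)
Require Import Defs.
From mathcomp Require Import all_boot all_algebra.
From mathcomp Require Import zify.
Set Warnings "-all".
Set Implicit Arguments. Unset Strict Implicit. Unset Printing Implicit Defensive.
Import GRing.Theory.
Local Open Scope ring_scope.


Lemma kspanP (K : pzRingType) (M : lmodType K) (s : seq M) y :
  in_Kspan s y <-> exists c : nat -> K, y = \sum_(i < size s) c i *: s`_i.
Proof.
split => [[c ->]|[c ->]]; first by exists (fun i => c`_i).
exists (mkseq c (size s)); apply: eq_bigr => i _; by rewrite nth_mkseq.
Qed.

Lemma kspan0 (K : pzRingType) (M : lmodType K) (s : seq M) : in_Kspan s 0.
Proof. apply/kspanP; exists (fun _ => 0); by rewrite big1 // => i _; rewrite scale0r. Qed.

Lemma kspanD (K : pzRingType) (M : lmodType K) (s : seq M) y z :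
  in_Kspan s y -> in_Kspan s z -> in_Kspan s (y + z).
Proof.
move=> /kspanP [c ->] /kspanP [d ->]; apply/kspanP; exists (fun i => c i + d i).
by rewrite -big_split; apply: eq_bigr => i _; rewrite scalerDl.
Qed.

Lemma kspanZ (K : pzRingType) (M : lmodType K) (s : seq M) k y :
  in_Kspan s y -> in_Kspan s (k *: y).
Proof.
move=> /kspanP [c ->]; apply/kspanP; exists (fun i => k * c i).
by rewrite scaler_sumr; apply: eq_bigr => i _; rewrite scalerA.
Qed.

Lemma kspan_sum (K : pzRingType) (M : lmodType K) (s : seq M) (c : nat -> K) :
  in_Kspan s (\sum_(i < size s) c i *: s`_i).
Proof. by apply/kspanP; exists c. Qed.

Lemma kspan_cat (K : pzRingType) (M : lmodType K) (s1 s2 : seq M) y z :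
  in_Kspan s1 y -> in_Kspan s2 z -> in_Kspan (s1 ++ s2) (y + z).
Proof.
move=> /kspanP [c ->] /kspanP [d ->]; apply/kspanP.
exists (fun i => if (i < size s1)%N then c i else d (i - size s1)%N).
rewrite size_cat big_split_ord /=; congr (_ + _); apply: eq_bigr => i _.
  by rewrite ltn_ord nth_cat ltn_ord.
by rewrite nth_cat ltnNge leq_addr /= addKn.
Qed.

Definition lin (K : pzRingType) (M1 M2 : lmodType K) (f : M1 -> M2) :=
  (forall x y, f (x + y) = f x + f y) /\ (forall k x, f (k *: x) = k *: f x).

Lemma lin0 (K : pzRingType) (M1 M2 : lmodType K) (f : M1 -> M2) : lin f -> f 0 = 0.
Proof. by case=> _ fZ; rewrite -(scale0r (0 : M1)) fZ scale0r. Qed.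

Lemma lin_sum (K : pzRingType) (M1 M2 : lmodType K) (f : M1 -> M2) n (c : nat -> K) (v : nat -> M1) :
  lin f -> f (\sum_(i < n) c i *: v i) = \sum_(i < n) c i *: f (v i).
Proof.
move=> fl; have [fD fZ] := fl.
rewrite (big_morph f fD (lin0 fl)); apply: eq_bigr => i _; by rewrite fZ.
Qed.

Lemma linB (K : pzRingType) (M1 M2 : lmodType K) (f : M1 -> M2) x y :
  lin f -> f (x - y) = f x - f y.
Proof. by case=> fD fZ; rewrite fD -scaleN1r fZ scaleN1r. Qed.

Lemma sub_sum (K : pzRingType) (M : lmodType K) (S : M -> Prop) n (F : 'I_n -> M) :
  is_Ksubmodule S -> (forall i, S (F i)) -> S (\sum_(i < n) F i).
Proof. by case=> S0 SD _ SF; apply: (big_ind S) => // i _. Qed.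

Lemma subN (K : pzRingType) (M : lmodType K) (S : M -> Prop) x :
  is_Ksubmodule S -> S x -> S (- x).
Proof. by case=> _ _ SZ Sx; rewrite -scaleN1r; apply: SZ. Qed.

Lemma kspan_map (K : pzRingType) (M1 M2 : lmodType K) (f : M1 -> M2) (B : M2 -> Prop) t y :
  lin f -> is_Ksubmodule B -> (forall i, (i < size t)%N -> B (f t`_i)) -> in_Kspan t y -> B (f y).
Proof.
move=> fl Bs Bt /kspanP [c ->]; rewrite lin_sum //; apply: sub_sum => // i.
by case: Bs => _ _ BZ; apply: BZ; apply: Bt.
Qed.

Definition Dset (K : pzRingType) (M : lmodType K) (N : M -> Prop) (t : seq M) z :=
  exists n y, N n /\ in_Kspan t y /\ z = n + y.

Lemma Dsub (K : pzRingType) (M : lmodType K) (N : M -> Prop) t :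
  is_Ksubmodule N -> is_Ksubmodule (Dset N t).
Proof.
case=> N0 ND NZ; split.
- by exists 0, 0; split => //; split; [apply: kspan0| rewrite addr0].
- move=> _ _ [n1 [y1 [h1 [s1 ->]]]] [n2 [y2 [h2 [s2 ->]]]].
  exists (n1 + n2), (y1 + y2); split; first exact: ND.
  by split; [exact: kspanD | rewrite addrACA].
- move=> k _ [n1 [y1 [h1 [s1 ->]]]]; exists (k *: n1), (k *: y1).
  by split; [exact: NZ | split; [exact: kspanZ | rewrite scalerDr]].
Qed.

Lemma fgT (K : pzRingType) (M : lmodType K) (S N1 N2 : M -> Prop) :
  (forall x, N1 x -> S x) -> fg_quotient S N1 -> fg_quotient N1 N2 -> fg_quotient S N2.
Proof.
move=> N1S [s1 [Hs1 H1]] [s2 [Hs2 H2]]; exists (s1 ++ s2); split.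
  move=> i; rewrite size_cat nth_cat; case: ifP => [hi _|hi hi2]; first exact: Hs1.
  by apply/N1S/Hs2; rewrite -(ltn_add2l (size s1)) subnKC // leqNgt hi.
move=> x /H1 [n [y [/H2 [n' [y' [hn' [sy' ->]]]] [sy ->]]]].
exists n', (y + y'); split => //; split; first exact: kspan_cat.
by rewrite addrAC addrA.
Qed.

Lemma fgM (K : pzRingType) (M : lmodType K) (S N1 N2 : M -> Prop) :
  (forall x, N1 x -> N2 x) -> fg_quotient S N1 -> fg_quotient S N2.
Proof.
move=> h [s [Hs H]]; exists s; split => // x /H [n [y [? ?]]]; exists n, y; split => //; exact: h.
Qed.

Lemma choice_nat (T : Type) (P : nat -> T -> Prop) (x0 : T) n :
  (forall i, (i < n)%N -> exists x, P i x) -> exists X : nat -> T, forall i, (i < n)%N -> P i (X i).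
Proof.
elim: n => [|n IH] H; first by exists (fun _ => x0).
have [X HX] : exists X : nat -> T, forall i, (i < n)%N -> P i (X i).
  by apply: IH => i hi; apply: H; apply: ltnW.
have [x Hx] := H n (ltnSn n).
exists (fun i => if i == n then x else X i) => i; rewrite ltnS leq_eqVlt.
by case: eqP => [->|_] //= /HX.
Qed.

Lemma delta_sum (R : pzSemiRingType) n (F : nat -> R) j : (j < n)%N ->
  \sum_(i < n) ((i : nat) == j)%:R * F i = F j.
Proof.
move=> hj; rewrite (bigD1 (Ordinal hj)) //= eqxx mul1r big1 ?addr0 // => i.
by rewrite -val_eqE /= => /negbTE ->; rewrite mul0r.
Qed.

Lemma G1 (K : comPzRingType) (M1 M2 : lmodType K) (f : M1 -> M2) (N2 : M2 -> Prop) :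
  noetherian_ring K -> lin f -> is_Ksubmodule N2 ->
  forall t (S : M1 -> Prop), is_Ksubmodule S -> (forall x, S x -> Dset N2 t (f x)) ->
  fg_quotient S (fun x => S x /\ N2 (f x)).
Proof.
move=> KN fl N2s t; have [fD fZ] := fl.
elim: t => [|u t IH] S Ss HS.
  exists [::]; split => // x Sx; have [n [y [Nn [/kspanP [c ey] e]]]] := HS x Sx.
  move: ey; rewrite big_ord0 => ey; subst y; rewrite addr0 in e.
  by exists x, 0; split; [rewrite e| split; [apply: kspan0| rewrite addr0]].
have Ds := Dsub t N2s; have [D0 DD DZ] := Ds.
have [S0 SD SZ] := Ss.
pose J k := exists x, S x /\ Dset N2 t (f x - k *: u).
have Ji : is_ideal_comm J.
  split.
  - by exists 0; split => //; rewrite lin0 // scale0r subr0.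
  - move=> k1 k2 [x1 [h1 d1]] [x2 [h2 d2]]; exists (x1 + x2); split; first exact: SD.
    by rewrite fD scalerDl opprD addrACA; apply: DD.
  - move=> k k1 [x1 [h1 d1]]; exists (k *: x1); split; first exact: SZ.
    by rewrite fZ -scalerA -scalerBr; apply: DZ.
have [g Hg] := KN J Ji.
have Jg : forall j, (j < size g)%N -> J g`_j.
  move=> j hj; apply/Hg; exists (mkseq (fun i => (i == j)%:R) (size g)).
  rewrite -(delta_sum (fun i => g`_i) hj); apply: eq_bigr => i _; by rewrite nth_mkseq.
have [X HX] := choice_nat 0 Jg.
pose S' x := S x /\ Dset N2 t (f x).
have S's : is_Ksubmodule S'.
  split; first by split => //; rewrite lin0.
  - by move=> x y [? ?] [? ?]; split; [apply: SD | rewrite fD; apply: DD].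
  - by move=> k x [? ?]; split; [apply: SZ | rewrite fZ; apply: DZ].
have [s' [Hs' H']] := IH S' S's (fun x h => h.2).
exists (mkseq X (size g) ++ s'); split.
  move=> i; rewrite size_cat size_mkseq nth_cat size_mkseq.
  case: ifP => [hi _|hi hi2]; first by rewrite nth_mkseq //; case: (HX i hi).
  by case: (Hs' (i - size g)%N) => //; rewrite -(ltn_add2l (size g)) subnKC // leqNgt hi.
move=> x Sx.
have [n [y [Nn [/kspanP [c ey] e]]]] := HS x Sx.
move: ey; rewrite big_ord_recl /= -/(size t) => ey.
have Dx : Dset N2 t (f x - c 0%N *: u).
  rewrite e ey addrCA addrC addrK.
  exists n, (\sum_(i < size t) c i.+1 *: t`_i); split => //; split; last by [].
  by apply/kspanP; exists (fun i => c i.+1).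
have Jc : J (c 0%N) by exists x.
have [d ed] := (Hg _).1 Jc.
pose z := \sum_(i < size g) d`_i *: X i.
have Sz : S z by apply: sub_sum => // i; apply: SZ; case: (HX i (ltn_ord i)).
have S'x : S' (x - z).
  split; first by apply: SD => //; apply: subN.
  have -> : f (x - z) = (f x - c 0%N *: u) - \sum_(i < size g) d`_i *: (f (X i) - g`_i *: u).
    rewrite linB // lin_sum // ed.
    under [X in _ = _ - X]eq_bigr => i _ do rewrite scalerBr scalerA.
    rewrite sumrB -scaler_suml opprB addrA addrNK //.
  apply: DD => //.
  apply: subN => //; apply: sub_sum => // i; apply: DZ; by case: (HX i (ltn_ord i)).
have [n' [y' [[[Sn' _] Nn'] [sy' e']]]] := H' _ S'x.
exists n', (z + y'); split => //; split.
  have sz : in_Kspan (mkseq X (size g)) z.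
    apply/kspanP; exists (fun i => d`_i); rewrite size_mkseq.
    by apply: eq_bigr => i _; rewrite nth_mkseq.
  exact: (kspan_cat sz sy').
by rewrite addrCA -e' addrC subrK.
Qed.

Lemma sub_pre (K : pzRingType) (M : lmodType K) (B S1 : M -> Prop) (F : nat -> M -> M) n :
  is_Ksubmodule B -> is_Ksubmodule S1 -> (forall j, lin (F j)) ->
  is_Ksubmodule (fun x => S1 x /\ forall j, (j < n)%N -> B (F j x)).
Proof.
move=> [B0 BD BZ] [S0 SD SZ] Fl; split.
- by split => // j _; rewrite lin0.
- move=> x y [h1 h2] [h3 h4]; split; first exact: SD.
  by move=> j hj; case: (Fl j) => -> _; apply: BD; [apply: h2 | apply: h4].
- move=> k x [h1 h2]; split; first exact: SZ.
  by move=> j hj; case: (Fl j) => _ ->; apply: BZ; apply: h2.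
Qed.

Lemma chain (K : comPzRingType) (M : lmodType K) (B : M -> Prop) t
  (S S1 : M -> Prop) (F : nat -> M -> M) n :
  noetherian_ring K -> is_Ksubmodule B -> is_Ksubmodule S1 -> (forall x, S1 x -> S x) ->
  fg_quotient S S1 -> (forall j, lin (F j)) -> (forall y, Dset B t y) ->
  fg_quotient S (fun x => S1 x /\ forall j, (j < n)%N -> B (F j x)).
Proof.
move=> KN Bs S1s S1S h Fl HD; elim: n => [|n IH].
  by apply: fgM h => x Sx; split.
have Sns := sub_pre n Bs S1s Fl.
have := G1 KN (Fl n) Bs Sns (fun x _ => HD (F n x)).
move=> h2; have h3 := fgT (fun x (hx : S1 x /\ forall j, (j < n)%N -> B (F j x)) => S1S x hx.1) IH h2.
apply: fgM h3 => x [[h1 h2'] h4]; split => // j; rewrite ltnS leq_eqVlt; case/orP => [/eqP -> //|]; exact: h2'.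
Qed.

Theorem lemma2p1 (K : comPzRingType) (A : lmodType K) (mul : A -> A -> A)
  (B : A -> Prop) :
  noetherian_ring K ->
  is_Kalgebra mul ->
  is_Ksubalgebra mul B ->
  fg_quotient (fun _ => True) B ->
  exists I : A -> Prop,
    [/\ is_Kideal mul I, (forall x, I x -> B x), fg_quotient B I
      & fg_quotient (fun _ => True) I].
Proof.
move=> KN [mA mDr mDl mZl mZr] [Bs BM] hfg.
have hfg' := hfg; case: hfg' => t [_ Ht].
have HD : forall y, Dset B t y by move=> y; apply: Ht.
have [B0 BD BZ] := Bs.
have m0r : forall a, mul a 0 = 0 by move=> a; have := mZr 0 a 0; rewrite !scale0r.
have m0l : forall a, mul 0 a = 0 by move=> a; have := mZl 0 0 a; rewrite !scale0r.
pose I x := [/\ B x, (forall a, B (mul a x)), (forall a, B (mul x a)) & (forall a b, B (mul a (mul x b)))].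
have hBI : fg_quotient B I.
  pose m := size t.
  pose F1 j x := mul t`_j x.
  pose F2 j x := mul x t`_j.
  pose F3 j x := mul t`_(j %/ m) (mul x t`_(j %% m)).
  have l1 : forall j, lin (F1 j) by move=> j; split => *; rewrite /F1 ?mDr ?mZr.
  have l2 : forall j, lin (F2 j) by move=> j; split => *; rewrite /F2 ?mDl ?mZl.
  have l3 : forall j, lin (F3 j) by move=> j; split => *; rewrite /F3 ?mDl ?mDr ?mZl ?mZr.
  have h0 : fg_quotient B B by exists [::]; split => // x Bx; exists x, 0; split => //; split; [apply: kspan0 | rewrite addr0].
  have h1 := chain m KN Bs Bs (fun x h => h) h0 l1 HD.
  have h2 := chain m KN Bs (sub_pre m Bs Bs l1) (fun x h => h.1) h1 l2 HD.
  have h3 := chain (m * m) KN Bs (sub_pre m Bs (sub_pre m Bs Bs l1) l2) (fun x h => h.1.1) h2 l3 HD.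
  apply: fgM h3 => x [[[Bx H1] H2] H3].
  have L : forall a, B (mul a x).
    move=> a; have [n [y [Bn [sy ->]]]] := HD a; rewrite mDl; apply: (BD); first exact: (BM).
    by apply: (kspan_map (f := fun a => mul a x)) sy => //; split => *; rewrite ?mDl ?mZl.
  have R : forall a, B (mul x a).
    move=> a; have [n [y [Bn [sy ->]]]] := HD a; rewrite mDr; apply: (BD); first exact: (BM).
    by apply: (kspan_map (f := fun a => mul x a)) sy => //; split => *; rewrite ?mDr ?mZr.
  split => // a b.
  have [n' [y' [Bn' [sy' ->]]]] := HD b; rewrite mDr mDr; apply: (BD).
    by rewrite mA; apply: (BM).
  apply: (kspan_map (f := fun b => mul a (mul x b))) sy' => //.
    by split => *; rewrite ?mDr ?mZr.
  move=> j hj; have [n [y [Bn [sy ->]]]] := HD a; rewrite mDl; apply: (BD).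
    by apply: (BM) => //; apply: H2.
  apply: (kspan_map (f := fun a => mul a (mul x t`_j))) sy => //.
  move=> i hi; have m0 : (0 < m)%N by exact: (leq_ltn_trans (leq0n i) hi).
  have := H3 (i * m + j)%N.
  rewrite /F3 divnMDl // (divn_small hj) addn0 modnMDl (modn_small hj).
  apply; apply: (@leq_trans (i * m + m)%N); first by rewrite ltn_add2l.
  by rewrite -mulSnr leq_mul2r hi orbT.
exists I; split.
- split.
  + split.
    * by split => // [a|a|a b]; rewrite ?m0r ?m0l ?m0r.
    * move=> x y [h1 h2 h3 h4] [h5 h6 h7 h8]; split.
      - exact: BD.
      - by move=> a; rewrite mDr; apply: (BD).
      - by move=> a; rewrite mDl; apply: (BD).
      - by move=> a b; rewrite mDl mDr; apply: (BD).
    * move=> k x [h1 h2 h3 h4]; split.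
      - exact: BZ.
      - by move=> a; rewrite mZr; apply: BZ.
      - by move=> a; rewrite mZl; apply: BZ.
      - by move=> a b; rewrite mZl mZr; apply: BZ.
  + move=> a x [h1 h2 h3 h4]; split.
    * exact: h2.
    * by move=> a'; rewrite mA.
    * by move=> a'; rewrite -mA.
    * by move=> a' b; rewrite -(mA a x b) mA.
  + move=> a x [h1 h2 h3 h4]; split.
    * exact: h3.
    * by move=> a'; apply: h4.
    * by move=> a'; rewrite -mA.
    * by move=> a' b; rewrite -mA.
- by move=> x [].
- exact: hBI.
- exact: (fgT (fun x _ => Logic.I) hfg hBI).
Qed.
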